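(* Let $n\ge1$. There exist constants $\delta_0\in(0,1)$, $C_n>0$ and $C'_n>0$ such that for all $k\in\mathbb N_0$ and $\lambda\in\mathbb R\setminus\{0\}$ with $\mu|\lambda|\le\delta_0$, where $\mu=2(2k+n)$, $$\big|R_k(\lambda,\sigma)-C_n\big|\le C'_n\,(\mu|\lambda|)^{1/2}.$$
   Context: For $\beta>-1$ and $k\in\mathbb N_0$ the Laguerre polynomial $L_k^\beta$ is defined by $e^{-r}r^{\beta}L_k^\beta(r)=\frac1{k!}\frac{d^k}{dr^k}\big(e^{-r}r^{k+\beta}\big)$. For $n\ge1$, $k\in\mathbb N_0$, $\lambda\in\mathbb R$, set $c_n=\frac{\Gamma(\frac{n+1}2)\Gamma(n)}{\sqrt\pi\,\Gamma(\frac n2)}$ and $$R_k(\lambda,\sigma)=c_n\frac{\Gamma(k+1)}{\Gamma(k+n)}\int_{-\pi/2}^{\pi/2}L_k^{n-1}\!\big(\tfrac12|\lambda|\cos\theta\big)\,e^{-\frac14|\lambda|\cos\theta}\,e^{\frac i4\lambda\sin\theta}\,(\cos\theta)^{n-1}\,d\theta .$$ *)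

(* Defs.v *)
From Stdlib Require Import Reals.
From Coquelicot Require Import Coquelicot.
Open Scope R_scope.

Definition Gamma (x : R) : R :=
  RInt_gen (fun t => Rpower t (x - 1) * exp (- t)) (at_right 0) (Rbar_locally p_infty).

(* Laguerre polynomial L_k^{beta} for integer beta = b (the only case used,
   beta = n - 1): closed form of the Rodrigues formula
   e^{-r} r^b L_k^b(r) = (1/k!) d^k/dr^k (e^{-r} r^{k+b}), namely
   L_k^b(r) = sum_{j=0}^k (-1)^j binom(k+b, k-j) r^j / j!. *)
Definition laguerre (k b : nat) (r : R) : R :=
  sum_f_R0 (fun j => (-1) ^ j * INR (Factorial.fact (k + b))
                     / (INR (Factorial.fact (k - j)) * INR (Factorial.fact (b + j))) * r ^ j / INR (Factorial.fact j)) k.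

Definition c_const (n : nat) : R :=
  Gamma ((INR n + 1) / 2) * Gamma (INR n) / (sqrt PI * Gamma (INR n / 2)).

Definition integrand_re (n k : nat) (lam th : R) : R :=
  laguerre k (n - 1) (/ 2 * Rabs lam * cos th) * exp (- (/ 4 * Rabs lam * cos th))
  * cos (/ 4 * lam * sin th) * (cos th) ^ (n - 1).
Definition integrand_im (n k : nat) (lam th : R) : R :=
  laguerre k (n - 1) (/ 2 * Rabs lam * cos th) * exp (- (/ 4 * Rabs lam * cos th))
  * sin (/ 4 * lam * sin th) * (cos th) ^ (n - 1).

(* R_k(lambda, sigma) (independent of sigma), a complex number *)
Definition Rk (n k : nat) (lam : R) : C :=
  let a := c_const n * Gamma (INR k + 1) / Gamma (INR k + INR n) in
  (a * RInt (integrand_re n k lam) (- (PI / 2)) (PI / 2),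
   a * RInt (integrand_im n k lam) (- (PI / 2)) (PI / 2)).

(* Main.v *)
Require Import Defs.
From Stdlib Require Import Reals.
From Coquelicot Require Import Coquelicot.
From Stdlib Require Import Lra Lia Psatz Factorial.
Open Scope R_scope.

Fixpoint Gm (m : nat) (t : R) : R :=
  match m with
  | O => - exp (- t)
  | S p => - t ^ (S p) * exp (- t) + INR (S p) * Gm p t
  end.

Lemma Gm_deriv m t : is_derive (Gm m) t (t ^ m * exp (- t)).
Proof.
  induction m as [|p IH].
  - simpl. auto_derive; auto. ring.
  - assert (H1 : is_derive (fun t => - t ^ (S p) * exp (- t)) t
                  (- INR (S p) * t ^ p * exp (- t) + t ^ (S p) * exp (- t))).
    { auto_derive; auto. rewrite <- tech_pow_Rmult. simpl. ring. }
    assert (H2 := is_derive_scal (Gm p) t (INR (S p)) _ IH).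
    assert (H := is_derive_plus _ _ _ _ _ H1 H2).
    simpl in H. change (Gm (S p)) with (fun t => - t ^ (S p) * exp (- t) + INR (S p) * Gm p t).
    replace (t ^ S p * exp (- t)) with
      (- INR (S p) * t ^ p * exp (- t) + t ^ S p * exp (- t) + INR (S p) * (t ^ p * exp (- t))) by ring.
    exact H.
Qed.

Lemma Gm_0 m : Gm m 0 = - INR (fact m).
Proof.
  induction m as [|p IH].
  - simpl. rewrite Ropp_0, exp_0. ring.
  - change (Gm (S p) 0) with (- 0 ^ (S p) * exp (- 0) + INR (S p) * Gm p 0).
    rewrite IH. rewrite fact_simpl, mult_INR. simpl (0 ^ S p). ring.
Qed.

Lemma Gm_le0 m t : 0 <= t -> Gm m t <= 0.
Proof.
  intros Ht. induction m as [|p IH].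
  - simpl. assert (0 < exp (- t)) by apply exp_pos. lra.
  - change (Gm (S p) t) with (- t ^ (S p) * exp (- t) + INR (S p) * Gm p t).
    assert (0 < exp (- t)) by apply exp_pos.
    assert (0 <= t ^ S p) by (apply pow_le; lra).
    assert (0 <= INR (S p)) by apply pos_INR.
    assert (0 <= t ^ S p * exp (- t)) by (apply Rmult_le_pos; lra).
    assert (INR (S p) * Gm p t <= 0).
    { rewrite <- (Rmult_0_r (INR (S p))). apply Rmult_le_compat_l; lra. }
    lra.
Qed.

Lemma sum_ge_last (f : nat -> R) N : (forall j, 0 <= f j) -> f N <= sum_f_R0 f N.
Proof.
  intros Hf. destruct N. simpl; lra.
  simpl. assert (0 <= sum_f_R0 f N).
  { clear -Hf. induction N; simpl. apply Hf. specialize (Hf (S N)). lra. }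
  lra.
Qed.

Lemma pow_exp_bound j t : 0 < t -> t ^ j * exp (- t) <= INR (fact (S j)) / t.
Proof.
  intros Ht.
  assert (H := exp_ge_taylor t (S j) (Rlt_le _ _ Ht)).
  assert (H2 := sum_ge_last (fun k => t ^ k / INR (fact k)) (S j)).
  assert (Hf : 0 < INR (fact (S j))) by (apply lt_0_INR, lt_O_fact).
  assert (H3 : t ^ S j / INR (fact (S j)) <= exp t).
  { eapply Rle_trans; [apply H2|exact H]. intros k. apply Rdiv_le_0_compat.
    apply pow_le; lra. apply lt_0_INR, lt_O_fact. }
  rewrite exp_Ropp.
  assert (He : 0 < exp t) by apply exp_pos.
  apply (Rmult_le_reg_r (t * exp t)). nra.
  replace (t ^ j * / exp t * (t * exp t)) with (t ^ S j) by (simpl; field; lra).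
  replace (INR (fact (S j)) / t * (t * exp t)) with (INR (fact (S j)) * exp t) by (field; lra).
  apply (Rmult_le_reg_r (/ INR (fact (S j)))). apply Rinv_0_lt_compat; lra.
  replace (INR (fact (S j)) * exp t * / INR (fact (S j))) with (exp t) by (field; lra).
  exact H3.
Qed.

Lemma lim_pow_exp j : is_lim (fun t => t ^ j * exp (- t)) p_infty 0.
Proof.
  apply is_lim_le_le_loc with (f := fun _ => 0) (g := fun t => INR (fact (S j)) * / t).
  - exists 0. intros t Ht. split.
    + apply Rmult_le_pos. apply pow_le; lra. apply Rlt_le, exp_pos.
    + apply pow_exp_bound; auto.
  - apply is_lim_const.
  - replace (Finite 0) with (Rbar_mult (INR (fact (S j))) (Rbar_inv p_infty)) by (simpl; f_equal; ring).
    apply is_lim_scal_l. apply is_lim_inv. apply is_lim_id. discriminate.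
Qed.

Lemma lim_Gm m : is_lim (Gm m) p_infty 0.
Proof.
  induction m as [|p IH].
  - simpl. replace (Finite 0) with (Rbar_opp (Finite 0)) by (simpl; f_equal; ring).
    apply is_lim_opp.
    apply (is_lim_ext (fun t => t ^ 0 * exp (- t))). intros; simpl; ring. apply lim_pow_exp.
  - change (Gm (S p)) with (fun t => - t ^ (S p) * exp (- t) + INR (S p) * Gm p t).
    replace (Finite 0) with (Finite (- 0 + INR (S p) * 0)) by (f_equal; ring).
    apply is_lim_plus'.
    + apply (is_lim_ext (fun t => - (t ^ (S p) * exp (- t)))). intros; ring.
      replace (Finite (- 0)) with (Rbar_opp (Finite 0)) by reflexivity.
      apply is_lim_opp, lim_pow_exp.
    + replace (Finite (INR (S p) * 0)) with (Rbar_mult (INR (S p)) 0) by reflexivity.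
      apply is_lim_scal_l. exact IH.
Qed.

Lemma Gamma_nat m : Gamma (INR m + 1) = INR (fact m).
Proof.
  unfold Gamma.
  apply is_RInt_gen_unique.
  assert (Hd : forall x, Derive (Gm m) x = x ^ m * exp (- x)).
  { intros; apply is_derive_unique, Gm_deriv. }
  apply is_RInt_gen_ext with (f := Derive (Gm m)).
  { apply Filter_prod with (Q := fun a => 0 < a) (R := fun b => 0 < b).
    - unfold at_right, within. apply filter_forall. auto.
    - exists 0. auto.
    - intros a b Ha Hb x Hx. simpl in Hx. rewrite Hd.
      assert (0 < x). { destruct Hx as [H1 _]. eapply Rle_lt_trans; [|exact H1].
        apply Rmin_case; lra. }
      replace (INR m + 1 - 1) with (INR m) by ring. rewrite Rpower_pow; auto. }
  replace (INR (fact m)) with (0 - Gm m 0) by (rewrite Gm_0; ring).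
  apply is_RInt_gen_Derive.
  - apply filter_forall. intros ab x _. eexists. apply Gm_deriv.
  - apply filter_forall. intros ab x _. apply (continuous_ext (fun x => x ^ m * exp (- x))).
    intros; rewrite Hd; auto. apply (ex_derive_continuous (V := R_NormedModule)). auto_derive. auto.
  - eapply filterlim_filter_le_1. apply filter_le_within.
    apply (ex_derive_continuous (V := R_NormedModule)). eexists. apply Gm_deriv.
  - apply lim_Gm.
Qed.


Definition gf (x t : R) := Rpower t (x - 1) * exp (- t).

Lemma Rpower_cont y t : 0 < t -> continuous (fun t => Rpower t y) t.
Proof.
  intros Ht. apply (ex_derive_continuous (V := R_NormedModule)).
  eexists. apply is_derive_Reals. apply derivable_pt_lim_power; auto.
Qed.

Lemma gf_cont x t : 0 < t -> continuous (gf x) t.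
Proof.
  intros Ht. unfold gf.
  apply (continuous_mult (fun t => Rpower t (x - 1)) (fun t => exp (- t))).
  apply Rpower_cont; auto.
  apply (ex_derive_continuous (V := R_NormedModule)). auto_derive; auto.
Qed.

Lemma gf_pos x t : 0 < t -> 0 < gf x t.
Proof. intros. unfold gf, Rpower. apply Rmult_lt_0_compat; apply exp_pos. Qed.

Lemma gf_ex x a b : 0 < a -> a <= b -> ex_RInt (gf x) a b.
Proof.
  intros Ha Hab. apply (ex_RInt_continuous (V := R_CompleteNormedModule)). intros z Hz.
  apply gf_cont. rewrite Rmin_left in Hz; lra.
Qed.

Lemma gf_mono x a' a b b' : 0 < a' -> a' <= a -> a <= b -> b <= b' ->
  RInt (gf x) a b <= RInt (gf x) a' b'.
Proof.
  intros H1 H2 H3 H4.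
  assert (E1 := RInt_Chasles (gf x) a' a b' (gf_ex x a' a H1 H2) (gf_ex x a b' ltac:(lra) ltac:(lra))).
  assert (E2 := RInt_Chasles (gf x) a b b' (gf_ex x a b ltac:(lra) H3) (gf_ex x b b' ltac:(lra) H4)).
  change (plus ?u ?v) with (u + v) in E1, E2.
  assert (P1 : 0 <= RInt (gf x) a' a).
  { apply RInt_ge_0; auto. apply gf_ex; auto. intros; apply Rlt_le, gf_pos; lra. }
  assert (P2 : 0 <= RInt (gf x) b b').
  { apply RInt_ge_0; auto. apply gf_ex; lra. intros; apply Rlt_le, gf_pos; lra. }
  lra.
Qed.

Lemma gf_bound x N : 0 < x -> x - 1 <= INR N ->
  forall a b, 0 < a -> a <= b -> RInt (gf x) a b <= / x - Gm N 1.
Proof.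
  intros Hx HN a b Ha Hab.
  set (a' := Rmin a 1). set (b' := Rmax b 1).
  assert (Ha' : 0 < a') by (unfold a'; apply Rmin_case; lra).
  assert (Ha'1 : a' <= 1) by apply Rmin_r.
  assert (Hb'1 : 1 <= b') by apply Rmax_r.
  eapply Rle_trans. apply (gf_mono x a' a b b'); auto. apply Rmin_l. apply Rmax_l.
  rewrite <- (RInt_Chasles (gf x) a' 1 b') by (apply gf_ex; lra).
  change (plus ?u ?v) with (u + v).
  assert (B1 : RInt (gf x) a' 1 <= / x).
  { eapply Rle_trans. apply RInt_le with (g := fun t => Rpower t (x - 1)); auto.
    apply gf_ex; auto. apply (ex_RInt_continuous (V := R_CompleteNormedModule)). intros z Hz. apply Rpower_cont.
    rewrite Rmin_left in Hz; lra.
    intros t Ht. unfold gf. assert (0 < Rpower t (x - 1)) by (unfold Rpower; apply exp_pos).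
    assert (exp (- t) <= 1). { rewrite <- exp_0. destruct (Req_dec t 0); [lra|]; apply Rlt_le, exp_increasing; lra. }
    nra.
    rewrite (is_RInt_unique _ _ _ (minus (Rpower 1 x / x) (Rpower a' x / x))).
    change (minus ?u ?v) with (u - v).
    assert (Rpower 1 x = 1). { unfold Rpower. rewrite ln_1, Rmult_0_r. apply exp_0. }
    assert (0 < Rpower a' x) by (unfold Rpower; apply exp_pos).
    rewrite H. assert (0 < / x) by (apply Rinv_0_lt_compat; auto).
    unfold Rdiv. assert (0 < Rpower a' x * / x) by (apply Rmult_lt_0_compat; auto). lra.
    apply (is_RInt_derive (V := R_CompleteNormedModule) (fun t => Rpower t x / x)).
    intros z Hz. rewrite Rmin_left in Hz by lra.
    apply is_derive_Reals.
    replace (Rpower z (x - 1)) with (x * Rpower z (x - 1) * / x) by (field; lra).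
    apply derivable_pt_lim_scal_right. apply derivable_pt_lim_power. lra.
    intros z Hz. rewrite Rmin_left in Hz by lra. apply Rpower_cont. lra. }
  assert (B2 : RInt (gf x) 1 b' <= - Gm N 1).
  { eapply Rle_trans. apply RInt_le with (g := fun t => t ^ N * exp (- t)); auto.
    apply gf_ex; lra. apply (ex_RInt_continuous (V := R_CompleteNormedModule)). intros z Hz.
    apply (ex_derive_continuous (V := R_NormedModule)). auto_derive; auto.
    intros t Ht. unfold gf. apply Rmult_le_compat_r. apply Rlt_le, exp_pos.
    rewrite <- Rpower_pow by lra. apply Rle_Rpower; lra.
    rewrite (is_RInt_unique _ _ _ (minus (Gm N b') (Gm N 1))).
    change (minus ?u ?v) with (u - v). assert (Gm N b' <= 0) by (apply Gm_le0; lra). lra.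
    apply (is_RInt_derive (V := R_CompleteNormedModule)). intros; apply Gm_deriv.
    intros z _. apply (ex_derive_continuous (V := R_NormedModule)). auto_derive; auto. }
  lra.
Qed.

Lemma Gamma_pos x N : 0 < x -> x - 1 <= INR N -> 0 < Gamma x.
Proof.
  intros Hx HN.
  set (E := fun y => exists a b, 0 < a /\ a <= b /\ y = RInt (gf x) a b).
  assert (HB : bound E).
  { exists (/ x - Gm N 1). intros y [a [b [Ha [Hab ->]]]]. apply gf_bound; auto. }
  assert (HE : exists y, E y). { exists (RInt (gf x) 1 1). exists 1, 1. repeat split; lra. }
  destruct (completeness E HB HE) as [l [Hub Hlub]].
  assert (HI : is_RInt_gen (gf x) (at_right 0) (Rbar_locally p_infty) l).
  { intros P [eps HP]. simpl in HP.
    destruct (Classical_Prop.classic (exists y, E y /\ l - eps < y)) as [[y [[a0 [b0 [Ha0 [Hab0 ->]]]] Hy]] | Hn].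
    2:{ exfalso. assert (l <= l - eps).
        { apply Hlub. intros y Ey. destruct (Rle_or_lt y (l - eps)); auto.
          exfalso; apply Hn; exists y; auto. }
        destruct eps; simpl in *; lra. }
    apply Filter_prod with (Q := fun a => 0 < a /\ a < a0) (R := fun b => b0 < b).
    - unfold at_right, within. exists (mkposreal a0 Ha0). intros u Hu Hu0.
      split; auto. change (Rabs (u - 0) < a0) in Hu. rewrite Rminus_0_r, Rabs_right in Hu; lra.
    - exists b0. auto.
    - intros a b [Ha Ha1] Hb. simpl. exists (RInt (gf x) a b). split.
      apply (RInt_correct (V := R_CompleteNormedModule)). apply gf_ex; lra.
      apply HP. change (Rabs (RInt (gf x) a b - l) < eps).
      assert (RInt (gf x) a b <= l). { apply Hub. exists a, b. repeat split; lra. }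
      assert (RInt (gf x) a0 b0 <= RInt (gf x) a b) by (apply gf_mono; lra).
      rewrite Rabs_left1; lra. }
  unfold Gamma. change (fun t => Rpower t (x - 1) * exp (- t)) with (gf x).
  rewrite (is_RInt_gen_unique _ _ HI).
  apply Rlt_le_trans with (RInt (gf x) (/2) 1).
  - apply RInt_gt_0. lra. intros; apply gf_pos; lra. intros; apply gf_cont; lra.
  - apply Hub. exists (/2), 1. repeat split; lra.
Qed.


Lemma fact_le j k : (j <= k)%nat -> (fact k <= k ^ j * fact (k - j))%nat.
Proof.
  induction j as [|j IH]; intros Hj.
  - rewrite Nat.sub_0_r. simpl. lia.
  - assert (IH' := IH ltac:(lia)).
    replace (k - j)%nat with (S (k - S j)) in IH' by lia.
    rewrite fact_simpl in IH'. rewrite Nat.pow_succ_r'.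
    assert (S (k - S j) <= k)%nat by lia.
    eapply Nat.le_trans. exact IH'.
    replace (k * k ^ j * fact (k - S j))%nat with (k ^ j * (k * fact (k - S j)))%nat by ring.
    apply Nat.mul_le_mono_l. apply Nat.mul_le_mono_r. lia.
Qed.

Lemma sum_bound_aux (t : nat -> R) x k : 0 <= x <= /2 ->
  (forall j, (1 <= j <= k)%nat -> Rabs (t j) <= x ^ j) ->
  Rabs (sum_f_R0 t k - t 0%nat) <= 2 * x - 2 * x ^ (S k).
Proof.
  intros Hx. induction k as [|k IH]; intros Ht.
  - simpl. rewrite Rminus_diag, Rabs_R0. lra.
  - simpl sum_f_R0.
    assert (IH' := IH (fun j Hj => Ht j ltac:(lia))).
    assert (Hk := Ht (S k) ltac:(lia)).
    replace (sum_f_R0 t k + t (S k) - t 0%nat) with ((sum_f_R0 t k - t 0%nat) + t (S k)) by ring.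
    eapply Rle_trans. apply Rabs_triang.
    assert (x ^ S (S k) = x * x ^ (S k)) by reflexivity.
    assert (0 <= x ^ S k) by (apply pow_le; lra).
    assert (2 * x * x ^ S k <= x ^ S k) by nra.
    lra.
Qed.

Lemma sum_bound (t : nat -> R) x k : 0 <= x <= /2 ->
  (forall j, (1 <= j <= k)%nat -> Rabs (t j) <= x ^ j) ->
  Rabs (sum_f_R0 t k - t 0%nat) <= 2 * x.
Proof.
  intros Hx Ht. eapply Rle_trans. apply (sum_bound_aux t x k Hx Ht).
  assert (0 <= x ^ S k) by (apply pow_le; lra). lra.
Qed.

Definition lag_term k b r j :=
  (-1) ^ j * INR (fact k) / (INR (fact (k - j)) * INR (fact (b + j))) * r ^ j / INR (fact j).

Lemma lag_norm k b r :
  INR (fact k) / INR (fact (k + b)) * laguerre k b r = sum_f_R0 (lag_term k b r) k.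
Proof.
  unfold laguerre. rewrite scal_sum. apply sum_eq. intros i Hi. unfold lag_term.
  assert (H1 := INR_fact_neq_0 (k + b)). assert (H2 := INR_fact_neq_0 (k - i)).
  assert (H3 := INR_fact_neq_0 (b + i)). assert (H4 := INR_fact_neq_0 i).
  field. auto.
Qed.

Lemma lag_term0 k b r : lag_term k b r 0 = / INR (fact b).
Proof.
  unfold lag_term. rewrite Nat.sub_0_r, Nat.add_0_r. simpl.
  assert (H1 := INR_fact_neq_0 k). assert (H3 := INR_fact_neq_0 b). field; auto.
Qed.

Lemma lag_bound k b r : 0 <= r -> INR k * r <= /2 ->
  Rabs (INR (fact k) / INR (fact (k + b)) * laguerre k b r - / INR (fact b)) <= 2 * (INR k * r).
Proof.
  intros Hr Hkr. rewrite lag_norm, <- (lag_term0 k b r).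
  apply sum_bound. split; auto. apply Rmult_le_pos; auto. apply pos_INR.
  intros j Hj.
  assert (E : lag_term k b r j = (-1) ^ j * (INR (fact k) / (INR (fact (k - j)) * INR (fact (b + j)) * INR (fact j)) * r ^ j)).
  { unfold lag_term. assert (H2 := INR_fact_neq_0 (k - j)).
    assert (H3 := INR_fact_neq_0 (b + j)). assert (H4 := INR_fact_neq_0 j). field; auto. }
  rewrite E, Rabs_mult, pow_1_abs, Rmult_1_l.
  assert (B1 := INR_fact_lt_0 (k - j)). assert (B2 := INR_fact_lt_0 (b + j)).
  assert (B3 := INR_fact_lt_0 j).
  assert (C2 : 1 <= INR (fact (b + j))) by (apply (le_INR 1); apply lt_O_fact).
  assert (C3 : 1 <= INR (fact j)) by (apply (le_INR 1); apply lt_O_fact).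
  assert (F : INR (fact k) <= INR k ^ j * INR (fact (k - j))).
  { rewrite <- pow_INR, <- mult_INR. apply le_INR, fact_le. lia. }
  assert (Hq : 0 <= INR (fact k) / (INR (fact (k - j)) * INR (fact (b + j)) * INR (fact j))).
  { apply Rdiv_le_0_compat. apply pos_INR. apply Rmult_lt_0_compat; auto. apply Rmult_lt_0_compat; auto. }
  assert (Hrj : 0 <= r ^ j) by (apply pow_le; auto).
  rewrite Rabs_right by (apply Rle_ge, Rmult_le_pos; auto).
  rewrite Rpow_mult_distr. apply Rmult_le_compat_r; auto.
  assert (0 <= INR k ^ j) by (apply pow_le, pos_INR).
  apply (Rmult_le_reg_r (INR (fact (k - j)) * INR (fact (b + j)) * INR (fact j))).
  apply Rmult_lt_0_compat; auto. apply Rmult_lt_0_compat; auto.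
  unfold Rdiv. rewrite Rmult_assoc, Rinv_l, Rmult_1_r.
  2:{ apply Rgt_not_eq. apply Rmult_lt_0_compat; auto. apply Rmult_lt_0_compat; auto. }
  assert (INR k ^ j * INR (fact (k - j)) <= INR k ^ j * INR (fact (k - j)) * (INR (fact (b + j)) * INR (fact j))).
  { rewrite <- (Rmult_1_r (INR k ^ j * INR (fact (k - j)))) at 1.
    apply Rmult_le_compat_l. apply Rmult_le_pos; lra. nra. }
  rewrite !Rmult_assoc in *. lra.
Qed.

Lemma sum_cont (g : nat -> R -> R) N x : (forall j, continuous (g j) x) ->
  continuous (fun r => sum_f_R0 (fun j => g j r) N) x.
Proof.
  intros Hg. induction N as [|N IH]; simpl.
  - apply Hg.
  - apply (continuous_plus (fun r => sum_f_R0 (fun j => g j r) N) (g (S N))); auto.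
Qed.

Lemma laguerre_cont k b x : continuous (laguerre k b) x.
Proof.
  unfold laguerre. apply (sum_cont (fun j r => (-1) ^ j * INR (fact (k + b)) /
    (INR (fact (k - j)) * INR (fact (b + j))) * r ^ j / INR (fact j))).
  intros j. apply (ex_derive_continuous (V := R_NormedModule)). auto_derive. auto.
Qed.


Lemma abs_sin_le y : Rabs (sin y) <= Rabs y.
Proof.
  assert (Hpos : forall z, 0 < z -> Rabs (sin z) <= z).
  { intros z Hz. assert (H1 := sin_lt_x z Hz). assert (H2 := SIN_bound z).
    destruct (Rle_or_lt 1 z).
    - apply Rabs_le. lra.
    - assert (0 < sin z) by (apply sin_gt_0; [lra| assert (H3 := PI2_1); lra]).
      rewrite Rabs_right; lra. }
  destruct (Rtotal_order y 0) as [Hy|[Hy|Hy]].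
  - rewrite (Rabs_left y) by lra. rewrite <- Rabs_Ropp, <- sin_neg. apply Hpos. lra.
  - subst. rewrite sin_0, Rabs_R0. lra.
  - rewrite (Rabs_right y) by lra. apply Hpos; lra.
Qed.

Lemma abs_1_cos y : Rabs (cos y - 1) <= Rabs y.
Proof.
  replace y with (2 * (y / 2)) at 1 by field.
  rewrite cos_2a_sin.
  assert (H1 := abs_sin_le (y / 2)). assert (H2 := SIN_bound (y / 2)).
  replace (1 - 2 * sin (y / 2) * sin (y / 2) - 1) with (- (2 * (sin (y / 2) * sin (y / 2)))) by ring.
  rewrite Rabs_Ropp, Rabs_mult, Rabs_mult, Rabs_right by lra.
  assert (Rabs (sin (y/2)) <= 1) by (apply Rabs_le; lra).
  assert (Rabs (y / 2) = Rabs y / 2). { unfold Rdiv. rewrite Rabs_mult, (Rabs_right (/2)) by lra. auto. }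
  assert (0 <= Rabs (sin (y/2))) by apply Rabs_pos.
  nra.
Qed.

Definition Kf n k := INR (fact k) / INR (fact (k + (n - 1))).
Definition rf lam th := / 2 * Rabs lam * cos th.
Definition Pf n k lam th := Kf n k * laguerre k (n - 1) (rf lam th).
Definition ef lam th := exp (- (/ 4 * Rabs lam * cos th)).
Definition wf n th := cos th ^ (n - 1).

Lemma cos_th th (Hth : - (PI / 2) <= th <= PI / 2) : 0 <= cos th <= 1.
Proof. split. apply cos_ge_0; lra. apply COS_bound. Qed.

Lemma P_bound n k lam th (Hth : - (PI / 2) <= th <= PI / 2) (Hkl : INR k * Rabs lam <= / 4) : Rabs (Pf n k lam th - / INR (fact (n - 1))) <= INR k * Rabs lam.
Proof.
  assert (Hc := cos_th th Hth). assert (0 <= Rabs lam) by apply Rabs_pos. assert (0 <= INR k) by apply pos_INR.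
  eapply Rle_trans. apply lag_bound.
  all: unfold Pf, Kf, rf; assert (0 <= Rabs lam * cos th) by (apply Rmult_le_pos; lra); assert (INR k * Rabs lam * cos th <= INR k * Rabs lam) by (rewrite <- (Rmult_1_r (INR k * Rabs lam)) at 2; apply Rmult_le_compat_l; [apply Rmult_le_pos|]; lra); nra.
Qed.

Lemma P_abs n k lam th (Hth : - (PI / 2) <= th <= PI / 2) (Hkl : INR k * Rabs lam <= / 4) : Rabs (Pf n k lam th) <= 2.
Proof.
  assert (H := P_bound n k lam th Hth Hkl). assert (H1 : / INR (fact (n - 1)) <= 1).
  { rewrite <- Rinv_1. apply Rinv_le_contravar. lra. apply (le_INR 1), lt_O_fact. }
  assert (H2 : 0 < / INR (fact (n - 1))) by (apply Rinv_0_lt_compat, INR_fact_lt_0).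
  apply Rabs_le_between' in H. apply Rabs_le. lra.
Qed.

Lemma e_bound lam th (Hth : - (PI / 2) <= th <= PI / 2) : 0 < ef lam th <= 1 /\ Rabs (ef lam th - 1) <= Rabs lam / 4.
Proof.
  assert (Hc := cos_th th Hth). assert (0 <= Rabs lam) by apply Rabs_pos.
  assert (Hs : 0 <= / 4 * Rabs lam * cos th <= Rabs lam / 4) by nra.
  assert (H1 := exp_ineq1_le (- (/ 4 * Rabs lam * cos th))).
  assert (H2 : ef lam th <= 1). { unfold ef. rewrite <- exp_0.
    destruct (Req_dec (/ 4 * Rabs lam * cos th) 0) as [E|E]. rewrite E, Ropp_0. lra.
    apply Rlt_le, exp_increasing. lra. }
  assert (0 < ef lam th) by apply exp_pos.
  split. lra. rewrite Rabs_left1 by lra. fold (ef lam th) in H1. lra.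
Qed.

Lemma w_bound n th : Rabs (wf n th) <= 1.
Proof. unfold wf. rewrite <- RPow_abs. rewrite <- (pow1 (n - 1)). apply pow_incr. split. apply Rabs_pos. apply Rabs_le.
  assert (H := COS_bound th). lra. Qed.

Lemma cs_bound lam th : Rabs (cos (/ 4 * lam * sin th) - 1) <= Rabs lam / 4
              /\ Rabs (sin (/ 4 * lam * sin th)) <= Rabs lam / 4.
Proof.
  assert (Ha : Rabs (/ 4 * lam * sin th) <= Rabs lam / 4).
  { rewrite !Rabs_mult. rewrite (Rabs_right (/4)) by lra.
    assert (Rabs (sin th) <= 1) by (apply Rabs_le; apply SIN_bound).
    assert (0 <= Rabs lam) by apply Rabs_pos. nra. }
  split; eapply Rle_trans; [apply abs_1_cos| exact Ha | apply abs_sin_le | exact Ha].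
Qed.

Lemma re_pt n k lam th (Hth : - (PI / 2) <= th <= PI / 2) (Hkl : INR k * Rabs lam <= / 4) : Rabs (Kf n k * integrand_re n k lam th - wf n th * / INR (fact (n - 1)))
   <= (INR k + 1) * Rabs lam.
Proof.
  assert (E : Kf n k * integrand_re n k lam th - wf n th * / INR (fact (n - 1)) =
     wf n th * ((Pf n k lam th - / INR (fact (n - 1))) + Pf n k lam th * ((ef lam th - 1) * cos (/ 4 * lam * sin th) + (cos (/ 4 * lam * sin th) - 1)))).
  { unfold integrand_re, Pf, Kf, wf, ef, rf. ring. }
  rewrite E. rewrite Rabs_mult.
  assert (Hw := w_bound n th). assert (Hp := P_bound n k lam th Hth Hkl). assert (Hpa := P_abs n k lam th Hth Hkl).
  destruct (e_bound lam th Hth) as [He1 He2]. destruct (cs_bound lam th) as [Hc1 Hc2].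
  assert (Hc : Rabs (cos (/ 4 * lam * sin th)) <= 1) by (apply Rabs_le; apply COS_bound).
  set (c := cos (/ 4 * lam * sin th)) in *.
  set (P := Pf n k lam th) in *. set (e := ef lam th) in *. set (w := wf n th) in *.
  assert (H1 : Rabs ((e - 1) * c + (c - 1)) <= Rabs lam / 2).
  { eapply Rle_trans. apply Rabs_triang. rewrite Rabs_mult.
    assert (0 <= Rabs (e - 1)) by apply Rabs_pos. assert (0 <= Rabs c) by apply Rabs_pos. nra. }
  assert (H2 : Rabs (P - / INR (fact (n - 1)) + P * ((e - 1) * c + (c - 1))) <= INR k * Rabs lam + Rabs lam).
  { eapply Rle_trans. apply Rabs_triang. rewrite Rabs_mult.
    assert (0 <= Rabs P) by apply Rabs_pos. assert (0 <= Rabs ((e - 1) * c + (c - 1))) by apply Rabs_pos. nra. }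
  assert (0 <= Rabs w) by apply Rabs_pos.
  assert (0 <= Rabs (P - / INR (fact (n - 1)) + P * ((e - 1) * c + (c - 1)))) by apply Rabs_pos.
  nra.
Qed.

Lemma im_pt n k lam th (Hth : - (PI / 2) <= th <= PI / 2) (Hkl : INR k * Rabs lam <= / 4) : Rabs (Kf n k * integrand_im n k lam th) <= (INR k + 1) * Rabs lam.
Proof.
  assert (E : Kf n k * integrand_im n k lam th = Pf n k lam th * ef lam th * sin (/ 4 * lam * sin th) * wf n th).
  { unfold integrand_im, Pf, Kf, wf, ef, rf. ring. }
  rewrite E, !Rabs_mult.
  assert (Hw := w_bound n th). assert (Hpa := P_abs n k lam th Hth Hkl).
  destruct (e_bound lam th Hth) as [He1 He2]. destruct (cs_bound lam th) as [Hc1 Hc2].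
  rewrite (Rabs_right (ef lam th)) by lra.
  set (P := Pf n k lam th) in *. set (e := ef lam th) in *. set (w := wf n th) in *.
  assert (0 <= Rabs P) by apply Rabs_pos. assert (0 <= Rabs w) by apply Rabs_pos.
  assert (0 <= Rabs (sin (/ 4 * lam * sin th))) by apply Rabs_pos.
  assert (0 <= INR k) by apply pos_INR. assert (0 <= Rabs lam) by apply Rabs_pos.
  assert (Rabs P * e <= 2) by nra.
  assert (Rabs P * e * Rabs (sin (/ 4 * lam * sin th)) <= 2 * (Rabs lam / 4)).
  { apply Rmult_le_compat; try nra. }
  assert (0 <= Rabs P * e * Rabs (sin (/ 4 * lam * sin th))) by (apply Rmult_le_pos; [apply Rmult_le_pos|]; lra).
  nra.
Qed.



Lemma re_cont n k lam th : continuous (integrand_re n k lam) th.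
Proof.
  unfold integrand_re.
  apply (continuous_mult (fun th => laguerre k (n - 1) (/ 2 * Rabs lam * cos th) * exp (- (/ 4 * Rabs lam * cos th)) * cos (/ 4 * lam * sin th)) (fun th => cos th ^ (n - 1))).
  apply (continuous_mult (fun th => laguerre k (n - 1) (/ 2 * Rabs lam * cos th) * exp (- (/ 4 * Rabs lam * cos th))) (fun th => cos (/ 4 * lam * sin th))).
  apply (continuous_mult (fun th => laguerre k (n - 1) (/ 2 * Rabs lam * cos th)) (fun th => exp (- (/ 4 * Rabs lam * cos th)))).
  apply (continuous_comp (fun th => / 2 * Rabs lam * cos th) (laguerre k (n - 1))).
  apply (ex_derive_continuous (V := R_NormedModule)); auto_derive; auto.
  apply laguerre_cont.
  all: apply (ex_derive_continuous (V := R_NormedModule)); auto_derive; auto.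
Qed.

Lemma im_cont n k lam th : continuous (integrand_im n k lam) th.
Proof.
  unfold integrand_im.
  apply (continuous_mult (fun th => laguerre k (n - 1) (/ 2 * Rabs lam * cos th) * exp (- (/ 4 * Rabs lam * cos th)) * sin (/ 4 * lam * sin th)) (fun th => cos th ^ (n - 1))).
  apply (continuous_mult (fun th => laguerre k (n - 1) (/ 2 * Rabs lam * cos th) * exp (- (/ 4 * Rabs lam * cos th))) (fun th => sin (/ 4 * lam * sin th))).
  apply (continuous_mult (fun th => laguerre k (n - 1) (/ 2 * Rabs lam * cos th)) (fun th => exp (- (/ 4 * Rabs lam * cos th)))).
  apply (continuous_comp (fun th => / 2 * Rabs lam * cos th) (laguerre k (n - 1))).
  apply (ex_derive_continuous (V := R_NormedModule)); auto_derive; auto.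
  apply laguerre_cont.
  all: apply (ex_derive_continuous (V := R_NormedModule)); auto_derive; auto.
Qed.

Lemma exR (f : R -> R) a b : (forall x, continuous f x) -> ex_RInt f a b.
Proof. intros H. apply (ex_RInt_continuous (V := R_CompleteNormedModule)). intros; apply H. Qed.

Lemma Cmod_le_sum x y : Cmod (x, y) <= Rabs x + Rabs y.
Proof.
  unfold Cmod. simpl fst; simpl snd.
  rewrite <- (sqrt_pow2 (Rabs x + Rabs y)) by (assert (H1 := Rabs_pos x); assert (H2 := Rabs_pos y); lra).
  apply sqrt_le_1_alt. rewrite <- (pow2_abs x), <- (pow2_abs y).
  assert (H1 := Rabs_pos x); assert (H2 := Rabs_pos y). nra.
Qed.

Theorem lemma4p1 (n : nat) (hn : (1 <= n)%nat) :
  exists delta0 Cn Cn' : R,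
    0 < delta0 < 1 /\ 0 < Cn /\ 0 < Cn' /\
    forall (k : nat) (lam : R),
      lam <> 0 ->
      2 * (2 * INR k + INR n) * Rabs lam <= delta0 ->
      Cmod (Cminus (Rk n k lam) (RtoC Cn))
        <= Cn' * sqrt (2 * (2 * INR k + INR n) * Rabs lam).
Proof.
  assert (Hn : 1 <= INR n) by (apply (le_INR 1); auto).
  assert (HPI := PI_RGT_0).
  assert (Hc : 0 < c_const n).
  { unfold c_const. apply Rmult_lt_0_compat. apply Rmult_lt_0_compat.
    apply (Gamma_pos _ n); lra. apply (Gamma_pos _ n); lra.
    apply Rinv_0_lt_compat, Rmult_lt_0_compat. apply sqrt_lt_R0; lra.
    apply (Gamma_pos _ n); lra. }
  set (c := c_const n) in *.
  set (I := RInt (fun th => cos th ^ (n - 1)) (- (PI / 2)) (PI / 2)).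
  assert (HI : 0 < I).
  { apply RInt_gt_0. lra. intros x Hx. apply pow_lt, cos_gt_0; lra.
    intros; apply (ex_derive_continuous (V := R_NormedModule)); auto_derive; auto. }
  assert (Hf := INR_fact_lt_0 (n - 1)).
  exists (/ 2), (c * I / INR (fact (n - 1))), (2 * c * PI).
  split. lra. split. apply Rdiv_lt_0_compat; auto. apply Rmult_lt_0_compat; auto.
  split. apply Rmult_lt_0_compat; lra.
  intros k lam Hl0 Hmu.
  set (B := 2 * (2 * INR k + INR n) * Rabs lam) in *.
  assert (Hk0 := pos_INR k). assert (Hla := Rabs_pos lam).
  assert (Hkl : INR k * Rabs lam <= / 4) by (unfold B in Hmu; nra).
  assert (HB1 : (INR k + 1) * Rabs lam <= B) by (unfold B; nra).
  assert (HB0 : 0 <= B) by (unfold B; nra).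
  assert (G1 : Gamma (INR k + 1) = INR (fact k)) by apply Gamma_nat.
  assert (G2 : Gamma (INR k + INR n) = INR (fact (k + (n - 1)))).
  { rewrite <- Gamma_nat. f_equal. rewrite plus_INR, minus_INR by auto. simpl. ring. }
  set (K := Kf n k).
  assert (Exre := exR (integrand_re n k lam) (- (PI / 2)) (PI / 2) (re_cont n k lam)).
  assert (Exim := exR (integrand_im n k lam) (- (PI / 2)) (PI / 2) (im_cont n k lam)).
  assert (Exw : ex_RInt (fun th => cos th ^ (n - 1)) (- (PI / 2)) (PI / 2)).
  { apply exR. intros; apply (ex_derive_continuous (V := R_NormedModule)); auto_derive; auto. }
  assert (Hre : Rabs (c * K * RInt (integrand_re n k lam) (- (PI / 2)) (PI / 2) - c * I / INR (fact (n - 1)))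
                <= c * (PI * B)).
  { assert (E : c * K * RInt (integrand_re n k lam) (- (PI / 2)) (PI / 2) - c * I / INR (fact (n - 1))
       = c * RInt (fun th => K * integrand_re n k lam th - cos th ^ (n - 1) * / INR (fact (n - 1))) (- (PI / 2)) (PI / 2)).
    { rewrite (RInt_minus (V := R_CompleteNormedModule) (fun th => K * integrand_re n k lam th) (fun th => cos th ^ (n - 1) * / INR (fact (n - 1)))).
      change (minus ?u ?v) with (u - v).
      assert (S1 : RInt (fun th => K * integrand_re n k lam th) (- (PI / 2)) (PI / 2) = K * RInt (integrand_re n k lam) (- (PI / 2)) (PI / 2))
        by exact (RInt_scal (V := R_CompleteNormedModule) (integrand_re n k lam) _ _ K Exre).
      rewrite S1.
      rewrite (RInt_ext (fun th => cos th ^ (n - 1) * / INR (fact (n - 1))) (fun th => / INR (fact (n - 1)) * cos th ^ (n - 1))) by (intros; apply Rmult_comm).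
      assert (S2 : RInt (fun th => / INR (fact (n - 1)) * cos th ^ (n - 1)) (- (PI / 2)) (PI / 2) = / INR (fact (n - 1)) * I)
        by exact (RInt_scal (V := R_CompleteNormedModule) (fun th => cos th ^ (n - 1)) _ _ _ Exw).
      rewrite S2. unfold Rdiv. ring.
      apply exR; intros. apply (continuous_mult (fun _ => K) (integrand_re n k lam)).
      apply continuous_const. apply re_cont.
      apply exR; intros. apply (ex_derive_continuous (V := R_NormedModule)); auto_derive; auto. }
    rewrite E, Rabs_mult, (Rabs_right c) by lra.
    apply Rmult_le_compat_l. lra.
    replace (PI * B) with ((PI / 2 - - (PI / 2)) * B) by field.
    apply abs_RInt_le_const. lra.
    apply exR; intros. apply (continuous_minus (fun th => K * integrand_re n k lam th) (fun th => cos th ^ (n - 1) * / INR (fact (n - 1)))).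
    apply (continuous_mult (fun _ => K) (integrand_re n k lam)). apply continuous_const. apply re_cont.
    apply (ex_derive_continuous (V := R_NormedModule)); auto_derive; auto.
    intros t Ht. eapply Rle_trans. apply (re_pt n k lam t); auto. lra. }
  assert (Him : Rabs (c * K * RInt (integrand_im n k lam) (- (PI / 2)) (PI / 2)) <= c * (PI * B)).
  { rewrite Rmult_assoc.
    assert (S1 : RInt (fun th => K * integrand_im n k lam th) (- (PI / 2)) (PI / 2) = K * RInt (integrand_im n k lam) (- (PI / 2)) (PI / 2))
      by exact (RInt_scal (V := R_CompleteNormedModule) (integrand_im n k lam) _ _ K Exim).
    rewrite <- S1.
    rewrite Rabs_mult, (Rabs_right c) by lra.
    apply Rmult_le_compat_l. lra.
    replace (PI * B) with ((PI / 2 - - (PI / 2)) * B) by field.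
    apply abs_RInt_le_const. lra.
    apply exR; intros. apply (continuous_mult (fun _ => K) (integrand_im n k lam)).
    apply continuous_const. apply im_cont.
    intros t Ht. eapply Rle_trans. apply (im_pt n k lam t); auto. lra. }
  unfold Rk. rewrite G1, G2. fold K.
  replace (c_const n * INR (fact k) / INR (fact (k + (n - 1)))) with (c * K) by (unfold K, c, Kf; unfold Rdiv; ring).
  change (Cminus (c * K * RInt (integrand_re n k lam) (- (PI / 2)) (PI / 2),
           c * K * RInt (integrand_im n k lam) (- (PI / 2)) (PI / 2)) (RtoC (c * I / INR (fact (n - 1)))))
    with (c * K * RInt (integrand_re n k lam) (- (PI / 2)) (PI / 2) - c * I / INR (fact (n - 1)),
          c * K * RInt (integrand_im n k lam) (- (PI / 2)) (PI / 2) + - 0).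
  rewrite Ropp_0, Rplus_0_r.
  eapply Rle_trans. apply Cmod_le_sum.
  assert (HsB : B <= sqrt B).
  { assert (sqrt B <= 1). { rewrite <- sqrt_1. apply sqrt_le_1_alt. lra. }
    assert (0 <= sqrt B) by apply sqrt_pos.
    rewrite <- (sqrt_sqrt B) at 1 by lra. nra. }
  assert (0 < c * PI) by (apply Rmult_lt_0_compat; lra).
  nra.
Qed.
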